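(* Let $\ell \ge 0$, let $\kappa>0$ and $g>0$ be constants, and let $n_{\mathbf u}, n_\theta, m_{\mathbf u}, m_\theta$ be positive integers. Let $M_\ell\in\mathbb{R}^{n_{\mathbf u}\times n_{\mathbf u}}$ be symmetric positive definite, $W_\ell\in\mathbb{R}^{n_\theta\times n_\theta}$ be diagonal with positive diagonal entries, and $B_\ell\in\mathbb{R}^{n_\theta\times n_{\mathbf u}}$, and set $$\mathcal{A}_\ell=\begin{bmatrix} M_\ell & B_\ell^T\\ B_\ell & -\kappa^2 W_\ell\end{bmatrix}.$$ Let $P_{\mathbf u}\in\mathbb{R}^{n_{\mathbf u}\times m_{\mathbf u}}$ and $P_\theta\in\mathbb{R}^{n_\theta\times m_\theta}$ have full column rank, let $\mathcal P=\begin{bmatrix}P_{\mathbf u}&0\\0&P_\theta\end{bmatrix}$, and define the coarse-level matrices $\mathcal{A}_{\ell+1}=\mathcal P^T\mathcal A_\ell\mathcal P$ and $W_{\ell+1}=P_\theta^TW_\ell P_\theta$ (so that $\mathcal{A}_{\ell+1}=\begin{bmatrix} P_{\mathbf u}^TM_\ell P_{\mathbf u} & (P_\theta^T B_\ell P_{\mathbf u})^T\\ P_\theta^T B_\ell P_{\mathbf u} & -\kappa^2 W_{\ell+1}\end{bmatrix}$). Let $\xi_\ell(\omega)\sim\mathcal N(0,I)$ be a standard Gaussian random vector in $\mathbb{R}^{n_\theta}$, and let the fine-level Gaussian field sample $\theta_\ell(\omega)$ be defined by $$\begin{bmatrix}\mathbf u_\ell\\ \theta_\ell(\omega)\end{bmatrix}=\mathcal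 A_\ell^{-1}\begin{bmatrix}0\\ -gW_\ell^{1/2}\xi_\ell(\omega)\end{bmatrix}.$$ Let $\mathcal F_\ell=\begin{bmatrix}0\\ -gW_\ell^{1/2}\xi_\ell(\omega)\end{bmatrix}$ and let $\delta U_\ell=\begin{bmatrix}\delta\mathbf u_\ell\\ \delta\theta_\ell(\omega)\end{bmatrix}$, $U_{\ell+1}=\begin{bmatrix}\mathbf u_{\ell+1}\\ \theta_{\ell+1}(\omega)\end{bmatrix}$ solve $$\begin{bmatrix}\mathcal A_\ell & \mathcal A_\ell\mathcal P\\ \mathcal P^T\mathcal A_\ell & 0\end{bmatrix}\begin{bmatrix}\delta U_\ell\\ U_{\ell+1}\end{bmatrix}=\begin{bmatrix}\mathcal F_\ell\\ 0\end{bmatrix}.$$ Then $\theta_\ell(\omega)=P_\theta\,\theta_{\ell+1}(\omega)+\delta\theta_\ell(\omega)$, and $\theta_{\ell+1}(\omega)$ is a coarse-level sample of the Gaussian random field from the same distribution, namely $$\begin{bmatrix}\mathbf u_{\ell+1}\\ \theta_{\ell+1}(\omega)\end{bmatrix}=\mathcal A_{\ell+1}^{-1}\begin{bmatrix}0\\ -gW_{\ell+1}^{1/2}\xi_{\ell+1}(\omega)\end{bmatrix},\qquad \xi_{\ell+1}(\omega):=W_{\ell+1}^{-1/2}P_\theta^TW_\ell^{1/2}\xi_\ell(\omega)\sim\mathcal N(0,I).$$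
   Context: This arises from a mixed finite element discretization (lowest-order Raviart–Thomas for the flux $\mathbf u$, piecewise constants for $\theta$) of the stochastic reaction–diffusion equation $(\kappa^2-\Delta)\theta = g\mathcal W$ with white noise $\mathcal W$: $M_\ell$ is the flux mass matrix, $B_\ell$ the discrete divergence, $W_\ell$ the (diagonal) mass matrix of piecewise constants at level $\ell$, and $P_{\mathbf u},P_\theta$ are interpolation (prolongation) operators from a coarser level $\ell+1$ to level $\ell$. For a symmetric positive definite matrix $W$, $W^{1/2}$ denotes its symmetric positive definite square root and $W^{-1/2}$ its inverse. *)

(* Defs.v *)
From HB Require Import structures.
From mathcomp Require Import all_boot all_order all_algebra.
From mathcomp Require Import all_classical all_reals all_analysis.
Set Implicit Arguments. Unset Strict Implicit. Unset Printing Implicit Defensive.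
Import Order.TTheory GRing.Theory Num.Theory.
Local Open Scope ring_scope.
Local Open Scope classical_set_scope.

Definition is_spd {R : realType} {n : nat} (A : 'M[R]_n) : Prop :=
  A^T = A /\ forall x : 'cV[R]_n, x != 0 -> 0 < (x^T *m A *m x) 0 0.

Definition is_spd_sqrt {R : realType} {n : nat} (S W : 'M[R]_n) : Prop :=
  is_spd S /\ S *m S = W.

(* W^{1/2}: the symmetric positive definite square root of W (chosen
   classically; it exists and is unique for W SPD) *)
Definition spd_sqrt {R : realType} {n : nat} (W : 'M[R]_n) : 'M[R]_n :=
  xget 0 (fun S => is_spd_sqrt S W).

(* Standard Gaussian random vector X ~ N(0, I) in R^n, via the standard
   definition of the multivariate normal: every linear functional t^T X is
   (univariate) normal with mean t^T 0 = 0 and variance t^T I t = t^T t.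
   (For t = 0 the functional is identically 0, which is trivially the
   degenerate N(0,0); the library's normal_prob 0 0 is not the Dirac mass,
   so that case is excluded.) *)
Definition std_gaussian_vec {R : realType} {d : measure_display}
  {T : measurableType d} (P : probability T R) {n : nat}
  (X : T -> 'cV[R]_n) : Prop :=
  forall t : 'cV[R]_n, t != 0 ->
    measurable_fun setT (fun w => (t^T *m X w) 0 0) /\
    forall A : set R, measurable A ->
      P ((fun w => (t^T *m X w) 0 0) @^-1` A)
      = normal_prob 0 (Num.sqrt ((t^T *m t) 0 0)) A.

Definition saddle {R : realType} {nu nt : nat} (M : 'M[R]_nu)
  (B : 'M[R]_(nt, nu)) (W : 'M[R]_nt) (kappa : R) : 'M[R]_(nu + nt) :=
  block_mx M B^T B (- (kappa ^+ 2) *: W).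

Definition prolong {R : realType} {nu nt mu mt : nat} (Pu : 'M[R]_(nu, mu))
  (Pt : 'M[R]_(nt, mt)) : 'M[R]_(nu + nt, mu + mt) :=
  block_mx Pu 0 0 Pt.

Definition rhs {R : realType} (nu : nat) {nt : nat} (g : R) (S : 'M[R]_nt)
  (xi : 'cV[R]_nt) : 'cV[R]_(nu + nt) :=
  col_mx 0 (- g *: (S *m xi)).

(* Main.v *)
Require Import Defs.
From HB Require Import structures.
From mathcomp Require Import all_boot all_order all_algebra.
From mathcomp Require Import all_classical all_reals all_analysis.
From mathcomp Require Import complex.
From mathcomp Require Import ring lra.
Set Implicit Arguments. Unset Strict Implicit. Unset Printing Implicit Defensive.
Import Order.TTheory GRing.Theory Num.Theory.
Local Open Scope ring_scope.
Section Lin.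
Variable R : realType.

Definition posdef n (A : 'M[R]_n) := forall x : 'cV_n, x != 0 -> 0 < (x^T *m A *m x) 0 0.

Lemma dot_sum n (x : 'cV[R]_n) : (x^T *m x) 0 0 = \sum_i x i 0 ^+ 2.
Proof. by rewrite mxE; apply: eq_bigr => i _; rewrite !mxE expr2. Qed.

Lemma dot_ge0 n (x : 'cV[R]_n) : 0 <= (x^T *m x) 0 0.
Proof. by rewrite dot_sum; apply: sumr_ge0 => i _; apply: sqr_ge0. Qed.

Lemma dot_eq0 n (x : 'cV[R]_n) : (x^T *m x) 0 0 = 0 -> x = 0.
Proof.
rewrite dot_sum => /psumr_eq0P H; apply/matrixP => i j.
rewrite (ord1 j) mxE; apply/eqP; rewrite -sqrf_eq0; apply/eqP; apply: H => // k _.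
exact: sqr_ge0.
Qed.

Lemma dot_gt0 n (x : 'cV[R]_n) : x != 0 -> 0 < (x^T *m x) 0 0.
Proof.
move=> xn0; rewrite lt_def dot_ge0 andbT; apply/eqP => /dot_eq0 x0.
by rewrite x0 eqxx in xn0.
Qed.

Lemma posdef_ge0 n (A : 'M[R]_n) (x : 'cV_n) : posdef A -> 0 <= (x^T *m A *m x) 0 0.
Proof.
move=> pA; have [->|xn0] := eqVneq x 0; first by rewrite mulmx0 mxE.
exact/ltW/pA.
Qed.

Lemma mx11_tr (a : 'M[R]_1) : a^T = a.
Proof. by rewrite [a]mx11_scalar tr_scalar_mx. Qed.

Lemma bil_sym m n (x : 'cV[R]_m) (A : 'M[R]_(m, n)) (y : 'cV[R]_n) :
  (x^T *m A *m y) = (y^T *m A^T *m x).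
Proof. by rewrite -[LHS]mx11_tr !trmx_mul trmxK mulmxA. Qed.

Lemma unit_from_ker n (A : 'M[R]_n) :
  (forall x : 'cV_n, A *m x = 0 -> x = 0) -> A \in unitmx.
Proof.
move=> H; rewrite -unitmx_tr -row_free_unit; apply: inj_row_free => v Hv.
have := H v^T; rewrite -[A *m v^T]trmxK trmx_mul trmxK Hv trmx0 => /(_ erefl).
by move=> /(congr1 trmx); rewrite trmxK trmx0.
Qed.

Lemma posdef_unit n (A : 'M[R]_n) : posdef A -> A \in unitmx.
Proof.
move=> pA; apply: unit_from_ker => x Ax; apply/eqP; apply/negPn/negP => xn0.
by have := pA x xn0; rewrite -mulmxA Ax mulmx0 mxE ltxx.
Qed.

End Lin.

Section Eig.
Variable R : realType.
Local Open Scope complex_scope.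
Local Notation Re := (@complex.Re R).
Local Notation Im := (@complex.Im R).

Lemma Re_sum n (f : 'I_n -> R[i]) : Re (\sum_i f i) = \sum_i Re (f i).
Proof. by apply: (big_morph Re) => // [[a b] [c d]]. Qed.
Lemma Im_sum n (f : 'I_n -> R[i]) : Im (\sum_i f i) = \sum_i Im (f i).
Proof. by apply: (big_morph Im) => // [[a b] [c d]]. Qed.

Lemma Re_mulR (c : R[i]) k : Re (c * k%:C) = Re c * k.
Proof. by case: c => a b /=; rewrite mulr0 subr0. Qed.
Lemma Im_mulR (c : R[i]) k : Im (c * k%:C) = Im c * k.
Proof. by case: c => a b /=; rewrite mulr0 add0r. Qed.
Lemma Re_mul (z c : R[i]) : Re (z * c) = Re z * Re c - Im z * Im c.
Proof. by case: z => a b; case: c. Qed.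
Lemma Im_mul (z c : R[i]) : Im (z * c) = Re z * Im c + Im z * Re c.
Proof. by case: z => a b; case: c. Qed.

Lemma sym_eigvec n (A : 'M[R]_n.+1) : A^T = A ->
  exists a (w : 'cV[R]_n.+1), w != 0 /\ A *m w = a *: w.
Proof.
move=> sA.
pose Ac := map_mx (real_complex R) A.
have [z /eigenvalueP [v Hv vn0]] := eigenvalue_closed Ac (ltn0Sn n).
pose x := map_mx Re v; pose y := map_mx Im v.
have Ex : x *m A = Re z *: x - Im z *: y.
  apply/rowP => j; rewrite !mxE -Re_mul.
  have -> : z * v 0 j = (v *m Ac) 0 j by rewrite Hv mxE.
  rewrite mxE Re_sum; apply: eq_bigr => i _; by rewrite !mxE Re_mulR.
have Ey : y *m A = Re z *: y + Im z *: x.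
  apply/rowP => j; rewrite !mxE -Im_mul.
  have -> : z * v 0 j = (v *m Ac) 0 j by rewrite Hv mxE.
  rewrite mxE Im_sum; apply: eq_bigr => i _; by rewrite !mxE Im_mulR.
have sym1 : x *m A *m y^T = y *m A *m x^T.
  by have := bil_sym x^T A y^T; rewrite !trmxK sA.
have sym2 : x *m y^T = y *m x^T by rewrite -[LHS]mx11_tr trmx_mul trmxK.
have xx : forall u : 'rV[R]_n.+1, u *m u^T = (u^T^T *m u^T).
  by move=> u; rewrite trmxK.
have Imz : Im z = 0.
  have aux : forall (P Q Rr : 'M[R]_1) a b, a *: P - b *: Q = a *: P + b *: Rr ->
      b * (Rr 0 0 + Q 0 0) = 0.
    move=> P Q Rr a b /(congr1 (fun M : 'M[R]_1 => M 0 0)); rewrite !mxE => h.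
    have -> : b * (Rr 0 0 + Q 0 0) = (a * P 0 0 + b * Rr 0 0) - (a * P 0 0 - b * Q 0 0) by ring.
    by rewrite h subrr.
  move: sym1; rewrite Ex Ey mulmxBl mulmxDl -!scalemxAl sym2 => /aux.
  move=> /eqP; rewrite mulf_eq0 => /orP[/eqP //|].
  rewrite !xx => /eqP H.
  have [hx hy] : x^T = 0 /\ y^T = 0.
    move: H => /eqP; rewrite paddr_eq0 ?dot_ge0 // => /andP[/eqP h1 /eqP h2].
    by split; apply: dot_eq0.
  exfalso; move/negP: vn0; apply; apply/eqP/rowP => j.
  have := congr1 (fun M : 'cV[R]_n.+1 => M j 0) hx; have := congr1 (fun M : 'cV[R]_n.+1 => M j 0) hy.
  rewrite !mxE; case: (v 0 j) => a b /= -> ->; done.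
have [x0|xn0] := eqVneq x^T 0.
  exists (Re z), y^T; split.
    apply/negP => /eqP y0; move/negP: vn0; apply; apply/eqP/rowP => j.
    have := congr1 (fun M : 'cV[R]_n.+1 => M j 0) x0; have := congr1 (fun M : 'cV[R]_n.+1 => M j 0) y0.
    rewrite !mxE; case: (v 0 j) => a b /= -> ->; done.
  by rewrite -{1}sA -trmx_mul Ey Imz scale0r addr0 linearZ.
exists (Re z), x^T; split => //.
by rewrite -{1}sA -trmx_mul Ex Imz scale0r subr0 linearZ.
Qed.
End Eig.

Section Sq.
Variable R : realType.

Lemma mx11E (a : 'M[R]_1) : a = (a 0 0)%:M.
Proof. exact: mx11_scalar. Qed.

Lemma householder n (e u : 'cV[R]_n) : e^T *m e = 1 -> u^T *m u = 1 ->
  exists H : 'M[R]_n, [/\ H^T = H, H *m H = 1%:M & H *m e = u].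
Proof.
move=> ee uu.
pose w := e - u; pose c := (w^T *m w) 0 0.
have [c0|cn0] := eqVneq c 0.
  have w0 : w = 0 by apply: dot_eq0.
  exists 1%:M; split; [exact: tr_scalar_mx | exact: mul1mx | rewrite mul1mx; exact: subr0_eq].
pose k := 2 / c.
have WW : w *m w^T *m (w *m w^T) = c *: (w *m w^T).
  by rewrite mulmxA -(mulmxA w) [w^T *m w]mx11E mul_mx_scalar -scalemxAl.
have tB : (e - u)^T = e^T - u^T by apply/matrixP => i j; rewrite !mxE.
have ue : e^T *m u = u^T *m e by rewrite -[LHS]mx11_tr trmx_mul trmxK.
have wtw : c = 2 - 2 * (u^T *m e) 0 0.
  rewrite /c /w tB mulmxBl !mulmxBr ee uu ue !mxE /=; ring.
have wte : w^T *m e = (1 - (u^T *m e) 0 0)%:M.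
  by rewrite /w tB mulmxBl ee [LHS]mx11E; congr (_%:M); rewrite !mxE /=.
have kc : k * (1 - (u^T *m e) 0 0) = 1.
  rewrite /k wtw; have : c != 0 by []; rewrite wtw => h.
  have h2 : 1 - (u^T *m e) 0 0 != 0.
    apply: contra h => /eqP h3; apply/eqP.
    have -> : 2 - 2 * (u^T *m e) 0 0 = 2 * (1 - (u^T *m e) 0 0) by ring.
    by rewrite h3 mulr0.
  have -> : 2 - 2 * (u^T *m e) 0 0 = 2 * (1 - (u^T *m e) 0 0) by ring.
  by field; rewrite ?h2 ?pnatr_eq0.
exists (1%:M - k *: (w *m w^T)); split.
- by rewrite linearB /= tr_scalar_mx linearZ /= trmx_mul trmxK.
- rewrite mulmxBl !mulmxBr !mul1mx mulmx1 -!scalemxAr -?scalemxAl WW !scalerA.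
  have -> : k * k * c = k + k by rewrite /k; field.
  move: (w *m w^T) => W.
  by apply/matrixP => i j; rewrite !mxE; ring.
- rewrite mulmxBl mul1mx -scalemxAl -mulmxA wte mul_mx_scalar scalerA kc scale1r.
  by rewrite /w opprB addrC subrK.
Qed.


Lemma posdef_conj n (H A : 'M[R]_n) : H *m H = 1%:M -> H^T = H -> posdef A ->
  posdef (H *m A *m H).
Proof.
move=> HH tH pA x xn0.
have Hx : H *m x != 0.
  apply: contra xn0 => /eqP h; apply/eqP.
  by rewrite -[x]mul1mx -HH -mulmxA h mulmx0.
have := pA _ Hx; congr (0 < _ 0 0).
by rewrite trmx_mul tH !mulmxA.
Qed.

Lemma quad_block m n (X : 'M[R]_m) (Y : 'M[R]_n) (z1 : 'cV[R]_m) (z2 : 'cV[R]_n) :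
  (col_mx z1 z2)^T *m block_mx X 0 0 Y *m col_mx z1 z2
  = z1^T *m X *m z1 + z2^T *m Y *m z2.
Proof.
by rewrite tr_col_mx mul_row_block !mulmx0 ?mul0mx ?addr0 ?add0r mul_row_col.
Qed.

Lemma addE m n (A B : 'M[R]_(m, n)) i j : (A + B) i j = A i j + B i j.
Proof. by rewrite mxE. Qed.
Lemma zeroE m n i j : (0 : 'M[R]_(m, n)) i j = 0.
Proof. by rewrite mxE. Qed.

Lemma posdef_block m n (X : 'M[R]_m) (Y : 'M[R]_n) :
  posdef X -> posdef Y -> posdef (block_mx X 0 0 Y).
Proof.
move=> pX pY z zn0; rewrite -[z]vsubmxK quad_block addE.
have [z10|z1n0] := eqVneq (usubmx z) 0.
  have z2n0 : dsubmx z != 0.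
    apply: contra zn0 => /eqP h; apply/eqP; by rewrite -[z]vsubmxK z10 h col_mx0.
  by rewrite z10 trmx0 !mul0mx zeroE add0r; apply: pY.
by apply: (lt_le_trans (pX _ z1n0)); rewrite lerDl; apply: posdef_ge0.
Qed.

Lemma posdef_scalar n (s : R) : 0 < s -> posdef (s%:M : 'M[R]_n).
Proof.
move=> s0 x xn0; rewrite mul_mx_scalar -scalemxAl mxE.
by apply: mulr_gt0 => //; apply: dot_gt0.
Qed.

Lemma trZ m n (a : R) (A : 'M[R]_(m, n)) : (a *: A)^T = a *: A^T.
Proof. by apply/matrixP => i j; rewrite !mxE. Qed.

Lemma spd_sqrt_ex n (A : 'M[R]_n) : is_spd A -> exists S, is_spd_sqrt S A.
Proof.
elim: n A => [|n IH] A [sA pA].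
  exists 0; split; last by rewrite mul0mx [A]thinmx0.
  by split; [rewrite trmx0 | move=> x; rewrite [x]flatmx0 eqxx].
have [a [w [wn0 Aw]]] := sym_eigvec sA.
pose c := (w^T *m w) 0 0.
have c0 : 0 < c by apply: dot_gt0.
have a0 : 0 < a.
  have := pA w wn0; rewrite -mulmxA Aw -scalemxAr mxE.
  by rewrite pmulr_lgt0.
pose s := Num.sqrt c.
have s0 : 0 < s by rewrite sqrtr_gt0.
pose u := s^-1 *: w.
have uu : u^T *m u = 1.
  rewrite /u trZ -scalemxAl -scalemxAr scalerA [w^T *m w]mx11E.
  rewrite scale_scalar_mx -/c.
  have -> : s^-1 / s * c = 1.
    have -> : c = s ^+ 2 by rewrite sqr_sqrtr // ltW.
    by field; rewrite gt_eqF.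
  by [].
pose e0 : 'cV[R]_(1 + n) := col_mx 1 0.
have ee : e0^T *m e0 = 1.
  by rewrite tr_col_mx mul_row_col trmx0 mul0mx addr0 tr_scalar_mx mul1mx.
have [H [tH HH He]] := householder ee uu.
pose B : 'M[R]_(1 + n) := H *m A *m H.
have Au : A *m u = a *: u by rewrite /u -scalemxAr Aw !scalerA mulrC.
have Hu : H *m u = e0 by rewrite -He mulmxA HH mul1mx.
have Be : B *m e0 = a *: e0.
  by rewrite /B -mulmxA He -mulmxA Au -scalemxAr Hu.
have tB : B^T = B by rewrite /B !trmx_mul tH sA mulmxA.
have [ul dl] : ulsubmx B = a%:M /\ dlsubmx B = 0.
  move: Be; rewrite -{1}[B]submxK mul_block_col !mulmx0 !addr0 !mulmx1.
  rewrite /e0 scale_col_mx scaler0 => /eq_col_mx [h1 h2].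
  by split => //; rewrite h1 -scalemx1.
have ur : ursubmx B = 0.
  by rewrite -tB -trmx_dlsub dl trmx0.
pose D := drsubmx B.
have BE : B = block_mx a%:M 0 0 D by rewrite -[B in LHS]submxK ul dl ur.
have tD : D^T = D by rewrite /D trmx_drsub tB.
have pB : posdef B by apply: posdef_conj.
have pD : posdef D.
  move=> y yn0; have z0 : col_mx (0 : 'cV[R]_1) y != 0.
    apply/negP => /eqP /eqP; rewrite col_mx_eq0 => /andP[_ /eqP y0]; by rewrite y0 eqxx in yn0.
  have := pB _ z0; rewrite BE quad_block trmx0 !mul0mx addE zeroE add0r //.
have [S' [[tS' pS'] S'S']] := IH D (conj tD pD).
pose K : 'M[R]_(1 + n) := block_mx (Num.sqrt a)%:M 0 0 S'.
exists (H *m K *m H); split; first split.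
- by rewrite !trmx_mul tH tr_block_mx !trmx0 tr_scalar_mx tS' mulmxA.
- apply: posdef_conj => //; apply: (@posdef_block 1 n) => //.
  by apply: posdef_scalar; rewrite sqrtr_gt0.
- have KK : K *m K = B.
    rewrite /K mulmx_block !mulmx0 !mul0mx !addr0 !add0r S'S' BE.
    by rewrite -scalar_mxM -expr2 sqr_sqrtr // ltW.
  rewrite !mulmxA -(mulmxA _ H H) HH mulmx1 -(mulmxA _ K K) KK /B -!mulmxA HH mulmx1 !mulmxA HH mul1mx //.
Qed.

End Sq.
Section Main.
Variable R : realType.

Lemma scaleE m n (a : R) (A : 'M[R]_(m, n)) i j : (a *: A) i j = a * A i j.
Proof. by rewrite mxE. Qed.

Lemma spd_sqrtP n (W : 'M[R]_n) : is_spd W -> is_spd_sqrt (spd_sqrt W) W.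
Proof. by move=> h; exact: (@xgetPex _ 0 (fun S => is_spd_sqrt S W) (spd_sqrt_ex h)). Qed.

Lemma fullcol_inj n m (P : 'M[R]_(n, m)) (x : 'cV_m) :
  \rank P = m -> P *m x = 0 -> x = 0.
Proof.
move=> rP Px.
have rf : row_free P^T by rewrite /row_free mxrank_tr rP.
have : x^T *m P^T = 0 *m P^T by rewrite -trmx_mul Px trmx0 mul0mx.
by move/(row_free_inj rf) => h; rewrite -[x]trmxK h trmx0.
Qed.

Lemma posdef_congr n m (P : 'M[R]_(n, m)) (A : 'M[R]_n) :
  \rank P = m -> posdef A -> posdef (P^T *m A *m P).
Proof.
move=> rP pA x xn0.
have Px : P *m x != 0.
  by apply/negP => /eqP /(fullcol_inj rP) h; rewrite h eqxx in xn0.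
by have := pA _ Px; congr (0 < _ 0 0); rewrite trmx_mul !mulmxA.
Qed.

Lemma diag_pos n (W : 'M[R]_n) : is_diag_mx W -> (forall i, 0 < W i i) -> is_spd W.
Proof.
move=> /is_diag_mxP dW Wp.
have dW' : forall i j, i != j -> W i j = 0 by move=> i j h; apply: dW.
split.
  apply/matrixP => i j; rewrite mxE; have [->|ij] := eqVneq i j; first by [].
  by rewrite !dW' // eq_sym.
move=> x xn0.
have E : (x^T *m W *m x) 0 0 = \sum_i W i i * x i 0 ^+ 2.
  rewrite mxE; apply: eq_bigr => j _; rewrite mxE (bigD1 j) //= big1 => [|i ij].
    by rewrite addr0 !mxE; ring.
  by rewrite dW' ?mulr0.
rewrite E lt0r; apply/andP; split; last first.
  by apply: sumr_ge0 => i _; apply: mulr_ge0; [apply/ltW/Wp | apply: sqr_ge0].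
apply/eqP => /psumr_eq0P h.
have h' : forall i, W i i * x i 0 ^+ 2 = 0.
  move=> i; apply: h => // k _; apply: mulr_ge0; [apply/ltW/Wp | apply: sqr_ge0].
move/negP: xn0; apply; apply/eqP/matrixP => i j; rewrite (ord1 j) mxE.
by move: (h' i) => /eqP; rewrite mulf_eq0 sqrf_eq0 gt_eqF //= => /eqP.
Qed.


Lemma saddle_unit nu nt (M : 'M[R]_nu) (B : 'M[R]_(nt, nu)) (W : 'M[R]_nt) (k : R) :
  posdef M -> posdef W -> k != 0 -> saddle M B W k \in unitmx.
Proof.
move=> pM pW k0; apply: unit_from_ker => x.
rewrite -[x]vsubmxK /saddle mul_block_col.
set a := usubmx x; set b := dsubmx x.
move=> /eqP; rewrite col_mx_eq0 => /andP[/eqP h1 /eqP h2].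
have e1 : (a^T *m M *m a) 0 0 + (a^T *m B^T *m b) 0 0 = 0.
  by rewrite -addE -!mulmxA -mulmxDr h1 mulmx0 zeroE.
have e2 : (b^T *m B *m a) 0 0 + (- k ^+ 2) * (b^T *m W *m b) 0 0 = 0.
  have := congr1 (fun X : 'M[R]_1 => X 0 0) (congr1 (mulmx b^T) h2).
  rewrite /= mulmxDr mulmx0 zeroE addE !mulmxA -scalemxAr -scalemxAl scaleE.
  by [].
have sy : (a^T *m B^T *m b) = (b^T *m B *m a) by rewrite bil_sym trmxK.
set p := (a^T *m M *m a) 0 0 in e1; set q := (b^T *m W *m b) 0 0 in e2.
have p0 : 0 <= p by apply: posdef_ge0.
have q0 : 0 <= q by apply: posdef_ge0.
have kk : 0 < k ^+ 2 by rewrite exprn_even_gt0 //=.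
have kq : 0 <= k ^+ 2 * q by apply: mulr_ge0 => //; apply: ltW.
rewrite sy in e1.
have pz : p = 0 by lra.
have qz' : k ^+ 2 * q = 0 by lra.
have qz : q = 0 by move: qz' => /eqP; rewrite mulf_eq0 gt_eqF //= => /eqP.
have az : a = 0.
  apply/eqP/negPn/negP => an0; have := pM _ an0; rewrite -/p pz ltxx //.
have bz : b = 0.
  apply/eqP/negPn/negP => bn0; have := pW _ bn0; rewrite -/q qz ltxx //.
by rewrite az bz col_mx0.
Qed.

Lemma prolong_saddle nu nt mu mt (M : 'M[R]_nu) (B : 'M[R]_(nt, nu)) (W : 'M[R]_nt)
  (k : R) (Pu : 'M[R]_(nu, mu)) (Pt : 'M[R]_(nt, mt)) :
  (prolong Pu Pt)^T *m saddle M B W k *m prolong Pu Pt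
  = saddle (Pu^T *m M *m Pu) (Pt^T *m B *m Pu) (Pt^T *m W *m Pt) k.
Proof.
rewrite /prolong /saddle tr_block_mx !trmx0 !mulmx_block !mulmx0 !mul0mx !addr0 !add0r.
congr block_mx.
  by rewrite !trmx_mul trmxK mulmxA.
by rewrite -scalemxAr -scalemxAl.
Qed.

End Main.

Unset Implicit Arguments.
Local Open Scope classical_set_scope.

Theorem proposition3p1 (R : realType) (d : measure_display)
  (Omega : measurableType d) (P : probability Omega R)
  (nu nt mu mt : nat) (kappa g : R)
  (M : 'M[R]_nu) (B : 'M[R]_(nt, nu)) (W : 'M[R]_nt)
  (Pu : 'M[R]_(nu, mu)) (Pt : 'M[R]_(nt, mt))
  (xi : Omega -> 'cV[R]_nt)
  (ul : Omega -> 'cV[R]_nu) (thl : Omega -> 'cV[R]_nt)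
  (du : Omega -> 'cV[R]_nu) (dth : Omega -> 'cV[R]_nt)
  (u1 : Omega -> 'cV[R]_mu) (th1 : Omega -> 'cV[R]_mt) :
  (0 < nu)%N -> (0 < nt)%N -> (0 < mu)%N -> (0 < mt)%N ->
  0 < kappa -> 0 < g ->
  is_spd M -> is_diag_mx W -> (forall i, 0 < W i i) ->
  \rank Pu = mu -> \rank Pt = mt ->
  std_gaussian_vec P xi ->
  (forall w, col_mx (ul w) (thl w)
     = invmx (saddle M B W kappa) *m rhs nu g (spd_sqrt W) (xi w)) ->
  (forall w,
     block_mx (saddle M B W kappa)
              (saddle M B W kappa *m prolong Pu Pt)
              ((prolong Pu Pt)^T *m saddle M B W kappa) 0
     *m col_mx (col_mx (du w) (dth w)) (col_mx (u1 w) (th1 w))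
     = col_mx (rhs nu g (spd_sqrt W) (xi w)) 0) ->
  let A1 := (prolong Pu Pt)^T *m saddle M B W kappa *m prolong Pu Pt in
  let W1 := Pt^T *m W *m Pt in
  let xi1 := fun w => invmx (spd_sqrt W1) *m Pt^T *m spd_sqrt W *m xi w in
  (forall w, thl w = Pt *m th1 w + dth w) /\
  (forall w, col_mx (u1 w) (th1 w)
     = invmx A1 *m rhs mu g (spd_sqrt W1) (xi1 w)) /\
  std_gaussian_vec P xi1.
Proof.
move=> _ _ _ _ k0 g0 [tM pM] dW Wp rPu rPt gxi H1 H2 A1 W1 xi1.
have [tW pW] := diag_pos dW Wp.
have [[tS pS] SS] := spd_sqrtP (conj tW pW).
have tW1 : W1^T = W1 by rewrite /W1 !trmx_mul trmxK tW mulmxA.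
have pW1 : posdef W1 by apply: posdef_congr.
have [[tS1 pS1] SS1] := spd_sqrtP (conj tW1 pW1).
have uS := posdef_unit pS.
have uS1 := posdef_unit pS1.
have kn0 : kappa != 0 by rewrite gt_eqF.
have uA : saddle M B W kappa \in unitmx by apply: saddle_unit.
have uA1 : A1 \in unitmx.
  rewrite /A1 prolong_saddle; apply: saddle_unit => //; exact: posdef_congr.
have eqs : forall w,
    saddle M B W kappa *m (col_mx (du w) (dth w) + prolong Pu Pt *m col_mx (u1 w) (th1 w))
      = rhs nu g (spd_sqrt W) (xi w) /\
    (prolong Pu Pt)^T *m saddle M B W kappa *m col_mx (du w) (dth w) = 0.
  move=> w; move: (H2 w); rewrite mul_block_col mul0mx addr0 => /eq_col_mx [e1 e2].
  by split => //; rewrite mulmxDr mulmxA.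
split.
  move=> w; have [e1 _] := eqs w; move: (H1 w); rewrite -e1 mulKmx //.
  rewrite /prolong mul_block_col !mul0mx addr0 add0r add_col_mx => /eq_col_mx [_ ->].
  by rewrite addrC.
split.
  move=> w; have [e1 e2] := eqs w.
  have E : A1 *m col_mx (u1 w) (th1 w) = (prolong Pu Pt)^T *m rhs nu g (spd_sqrt W) (xi w).
    by rewrite -e1 mulmxDr mulmxDr !mulmxA e2 add0r.
  have F : rhs mu g (spd_sqrt W1) (xi1 w) = (prolong Pu Pt)^T *m rhs nu g (spd_sqrt W) (xi w).
    rewrite /prolong /rhs tr_block_mx !trmx0 mul_block_col !mulmx0 !mul0mx !addr0 add0r.
    by rewrite /xi1 -!mulmxA mulKVmx // !mulmxA -scalemxAr !mulmxA.
  by rewrite F -E mulKmx.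
move=> t tn0.
pose C := invmx (spd_sqrt W1) *m Pt^T *m spd_sqrt W.
pose t' := C^T *m t.
have t'n0 : t' != 0.
  apply/negP => /eqP h; move/negP: tn0; apply; apply/eqP.
  move: h; rewrite /t' /C !trmx_mul tS -!mulmxA.
  move=> /(congr1 (mulmx (invmx (spd_sqrt W)))); rewrite mulKmx // mulmx0.
  move=> h0; rewrite trmxK in h0; have h := fullcol_inj rPt h0.
  have uT : (invmx (spd_sqrt W1))^T \in unitmx by rewrite unitmx_tr unitmx_inv.
  by move: (congr1 (mulmx (invmx (invmx (spd_sqrt W1))^T)) h); rewrite mulKmx // mulmx0.
have CC : C *m (spd_sqrt W *m (Pt *m invmx (spd_sqrt W1))) = 1%:M.
  rewrite /C -!mulmxA (mulmxA (spd_sqrt W) (spd_sqrt W)) SS.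
  have -> : Pt^T *m (W *m (Pt *m invmx (spd_sqrt W1))) = W1 *m invmx (spd_sqrt W1).
    by rewrite /W1 !mulmxA.
  by rewrite -{2}SS1 -(mulmxA (spd_sqrt W1)) mulKmx // mulmxV.
have CT : C^T = spd_sqrt W *m (Pt *m invmx (spd_sqrt W1)).
  by rewrite /C !trmx_mul trmxK tS trmx_inv tS1 mulmxA.
have tt : t'^T *m t' = t^T *m t.
  by rewrite /t' trmx_mul trmxK -mulmxA (mulmxA C) CT CC mul1mx.
have gen : forall f h : Omega -> R, f =1 h ->
    measurable_fun setT f /\ (forall A, measurable A ->
      P (f @^-1` A) = normal_prob 0 (Num.sqrt ((t^T *m t) 0 0)) A) ->
    measurable_fun setT h /\ (forall A, measurable A ->
      P (h @^-1` A) = normal_prob 0 (Num.sqrt ((t^T *m t) 0 0)) A).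
  by move=> f h /funext ->.
apply: (gen (fun w => (t'^T *m xi w) 0 0)).
  by move=> w /=; rewrite /t' /xi1 trmx_mul trmxK !mulmxA.
rewrite -tt; exact: (gxi t' t'n0).
Qed.
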